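(* Let $M,N$ be weights of $\mathbb{R}^m,\mathbb{R}^n$, let $A\in\mathbb{R}^{m\times n}$ with $MA=AN$, and let $K\subseteq\mathbb{R}^n$ be a closed cone. Then $$A^{[\dagger]}\circ A\circ K\subseteq K\iff A^{[\dagger]}\circ A\circ K^{[*]}\subseteq K^{[*]}.$$
   Context: A weight is a real symmetric matrix $W$ with $W^2=I$. $\mathbb{R}^m$ and $\mathbb{R}^n$ carry weights $M\in\mathbb{R}^{m\times m}$ and $N\in\mathbb{R}^{n\times n}$, respectively. The indefinite inner product on the space with weight $W$ is $[x,y]=\langle x,Wy\rangle$. Indefinite matrix product: if $B$ has $p$ columns and $C$ has $p$ rows (or is a vector in $\mathbb{R}^p$), $p\in\{m,n\}$, and $W$ is the weight of $\mathbb{R}^p$, then $B\circ C:=BWC$. $I$ denotes an identity matrix of the appropriate size. Indefinite adjoint of $B\in\mathbb{R}^{p\times q}$: $B^{[*]}:=W_qB^TW_p$, where $W_p,W_q$ are the weights of $\mathbb{R}^p,\mathbb{R}^q$. Indefinite Moore–Penrose inverse: for $A\in\mathbb{R}^{m\times n}$, $A^{[\dagger]}$ is the unique $X\in\mathbb{R}^{n\times m}$ such that - $A\circ X\circ A=A$, - $X\circ A\circ X=X$, - $(A\circ X)^{[*]}=A\circ X$, - $(X\circ A)^{[*]}=X\circ A$. It exists and equals $NA^{\dagger}M$, where $A^\dagger$ is the usual Moore–Penrose inverse. A cone is a nonempty set closed under addition and under multiplication by nonnegative scalars. For $S$ a subset of $\mathbb{R}^p$ with weight $W$, the dual is $S^{[*]}=\{x\in\mathbb{R}^p:[x,t]\ge0\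 \forall t\in S\}$. For a matrix $B$ and a set $S$, $B\circ S=\{B\circ s:s\in S\}$. *)

(* Defs.v *)
From Stdlib Require Import Reals.
From mathcomp Require Import all_boot.
From mathcomp Require Import matrix.
Set Implicit Arguments. Unset Strict Implicit. Unset Printing Implicit Defensive.
Local Open Scope R_scope.

Definition rsum (n : nat) (F : 'I_n -> R) : R := \big[Rplus/R0]_(i < n) F i.

Definition mmul (m p q : nat) (B : 'M[R]_(m, p)) (C : 'M[R]_(p, q)) : 'M[R]_(m, q) :=
  \matrix_(i, j) rsum (fun k => B i k * C k j).

Definition idm (n : nat) : 'M[R]_n := \matrix_(i, j) (if i == j then 1 else 0).

Definition is_weight (n : nat) (W : 'M[R]_n) : Prop :=
  trmx W = W /\ mmul W W = idm n.

Definition vadd (n : nat) (x y : 'cV[R]_n) : 'cV[R]_n := \matrix_(i, j) (x i j + y i j).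
Definition vscale (n : nat) (a : R) (x : 'cV[R]_n) : 'cV[R]_n := \matrix_(i, j) (a * x i j).

Definition iprod (n : nat) (W : 'M[R]_n) (x y : 'cV[R]_n) : R :=
  rsum (fun i => x i ord0 * (mmul W y) i ord0).

Definition imul (m p q : nat) (W : 'M[R]_p) (B : 'M[R]_(m, p)) (C : 'M[R]_(p, q))
  : 'M[R]_(m, q) := mmul (mmul B W) C.

Definition iadj (p q : nat) (Wp : 'M[R]_p) (Wq : 'M[R]_q) (B : 'M[R]_(p, q))
  : 'M[R]_(q, p) := mmul (mmul Wq (trmx B)) Wp.

(* X is the indefinite Moore-Penrose inverse A^[dagger] of A in R^{m x n}
   (the unique matrix satisfying the four Penrose-type equations) *)
Definition is_imp (m n : nat) (M : 'M[R]_m) (N : 'M[R]_n)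
  (A : 'M[R]_(m, n)) (X : 'M[R]_(n, m)) : Prop :=
  [/\ imul M (imul N A X) A = A,
      imul N (imul M X A) X = X,
      iadj M M (imul N A X) = imul N A X
    & iadj N N (imul M X A) = imul M X A].

Definition vset (n : nat) := 'cV[R]_n -> Prop.

Definition is_cone (n : nat) (K : vset n) : Prop :=
  (exists x, K x) /\
  (forall x y, K x -> K y -> K (vadd x y)) /\
  (forall a x, 0 <= a -> K x -> K (vscale a x)).

(* closed in the standard topology of R^n (sequential closedness,
   convergence = coordinatewise convergence) *)
Definition is_closed (n : nat) (K : vset n) : Prop :=
  forall (u : nat -> 'cV[R]_n) (x : 'cV[R]_n),
    (forall k, K (u k)) ->
    (forall i j, Un_cv (fun k => u k i j) (x i j)) -> K x.

Definition idual (n : nat) (W : 'M[R]_n) (S : vset n) : vset n :=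
  fun x => forall t, S t -> 0 <= iprod W x t.

Definition iimg (p q : nat) (W : 'M[R]_p) (B : 'M[R]_(q, p)) (S : vset p) : vset q :=
  fun y => exists2 s, S s & y = imul W B s.

Definition vsubset (n : nat) (S T : vset n) : Prop := forall x, S x -> T x.

(* Main.v *)
Require Import Defs.
From Stdlib Require Import Reals Lra Classical FunctionalExtensionality ClassicalEpsilon.
From mathcomp Require Import all_boot.
From mathcomp Require Import matrix.
Local Open Scope R_scope.
Section Gen.
Variable T : eqType.
Implicit Types (r : seq T) (F G : T -> R).
Lemma gsum_add r F G : \big[Rplus/R0]_(i <- r) (F i + G i) =
  \big[Rplus/R0]_(i <- r) F i + \big[Rplus/R0]_(i <- r) G i.
Proof. elim: r => [|i r IH]; rewrite ?big_nil ?big_cons. by rewrite Rplus_0_l.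
rewrite IH; ring. Qed.
Lemma gsum_scal r a F : \big[Rplus/R0]_(i <- r) (a * F i) = a * \big[Rplus/R0]_(i <- r) F i.
Proof. elim: r => [|i r IH]; rewrite ?big_nil ?big_cons. by rewrite Rmult_0_r.
rewrite IH; ring. Qed.
Lemma gsum_ge0 r F : (forall i, 0 <= F i) -> 0 <= \big[Rplus/R0]_(i <- r) F i.
Proof. move=> H; elim: r => [|i r IH]; rewrite ?big_nil ?big_cons. apply: Rle_refl.
have := H i; lra. Qed.
Lemma gsum_term r F j : (forall i, 0 <= F i) -> j \in r -> F j <= \big[Rplus/R0]_(i <- r) F i.
Proof.
move=> H; elim: r => [|i r IH] //= Hj; rewrite big_cons.
have H0 := @gsum_ge0 r F H.
rewrite in_cons in Hj; case/orP: Hj => [/eqP ->| Hj]; first lra.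
have := IH Hj; have := H i; lra.
Qed.
Lemma gsum_cv r (F : nat -> T -> R) f :
  (forall i, Un_cv (fun k => F k i) (f i)) ->
  Un_cv (fun k => \big[Rplus/R0]_(i <- r) F k i) (\big[Rplus/R0]_(i <- r) f i).
Proof.
move=> H; elim: r => [|i r IH].
  rewrite big_nil. have -> : (fun k => \big[Rplus/R0]_(i <- [::]) F k i) = fun _ => R0.
    by apply: functional_extensionality_dep => k; rewrite big_nil.
  move=> e He; exists 0%nat => k _; rewrite /R_dist Rminus_eq_0 Rabs_R0; lra.
rewrite big_cons.
have -> : (fun k => \big[Rplus/R0]_(j <- (i :: r)) F k j) =
  fun k => F k i + \big[Rplus/R0]_(j <- r) F k j.
  by apply: functional_extensionality_dep => k; rewrite big_cons.
exact: CV_plus.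
Qed.
End Gen.

Section Sums.
Variable n : nat.
Implicit Types F G : 'I_n -> R.
Lemma rsum_ext F G : (forall i, F i = G i) -> rsum F = rsum G.
Proof. by move=> H; apply: eq_bigr. Qed.
Lemma rsum_add F G : rsum (fun i => F i + G i) = rsum F + rsum G.
Proof. exact: gsum_add. Qed.
Lemma rsum_scal a F : rsum (fun i => a * F i) = a * rsum F.
Proof. exact: gsum_scal. Qed.
Lemma rsum_ge0 F : (forall i, 0 <= F i) -> 0 <= rsum F.
Proof. exact: gsum_ge0. Qed.
Lemma rsum_term F j : (forall i, 0 <= F i) -> F j <= rsum F.
Proof. move=> H; apply: gsum_term => //; exact: mem_index_enum. Qed.
Lemma rsum_cv (F : nat -> 'I_n -> R) f :
  (forall i, Un_cv (fun k => F k i) (f i)) -> Un_cv (fun k => rsum (F k)) (rsum f).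
Proof. exact: gsum_cv. Qed.
End Sums.
Set Implicit Arguments. Unset Strict Implicit.


Lemma cv_const (c : R) : Un_cv (fun _ => c) c.
Proof. move=> e He; exists 0%nat => k _; rewrite /R_dist Rminus_eq_0 Rabs_R0; lra. Qed.

Lemma cv_inv : Un_cv (fun k => / (INR k + 1)) 0.
Proof.
move=> e He; have [N [HN HN0]] := archimed_cor1 e He; exists N => k Hk.
rewrite /R_dist Rminus_0_r.
have HNp : 0 < INR N by apply: lt_0_INR.
have Hk' : INR N <= INR k + 1 by have := le_INR _ _ Hk; lra.
have Hpos : 0 < / (INR k + 1) by apply: Rinv_0_lt_compat; lra.
rewrite Rabs_right; last lra.
have := Rinv_le_contravar _ _ HNp Hk'; lra.
Qed.

Lemma small_lambda (a c : R) : 0 <= c -> (forall l, 0 < l -> l <= 1 -> a <= l * c) -> a <= 0.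
Proof.
move=> Hc H; apply: Rnot_lt_le => Ha.
have Hac : 0 < a + c by lra.
have Hi : 0 < / (a + c) by apply: Rinv_0_lt_compat.
have H1 : 0 < a * / (a + c) by apply: Rmult_lt_0_compat.
have H3 : 0 <= c * / (a + c) by apply: Rmult_le_pos => //; lra.
have E1 : a * / (a + c) = 1 - c * / (a + c) by field; lra.
have H2 : a * / (a + c) <= 1 by lra.
have := H _ H1 H2.
have -> : a * / (a + c) * c = a - a * a * / (a + c) by field; lra.
have : 0 < a * a * / (a + c) by apply: Rmult_lt_0_compat => //; nra.
lra.
Qed.

Definition dist2 n (z t : 'cV[R]_n) := rsum (fun i => (z i ord0 - t i ord0) * (z i ord0 - t i ord0)).

Lemma dist2_ge0 n (z t : 'cV[R]_n) : 0 <= dist2 z t.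
Proof. apply: rsum_ge0 => i; apply: Rle_0_sqr. Qed.

Lemma rsum_lin3 n a b c (f g h : 'I_n -> R) :
  a * rsum f + b * rsum g + c * rsum h = rsum (fun i => a * f i + b * g i + c * h i).
Proof. by rewrite !rsum_add !rsum_scal. Qed.

Lemma abs_lt_sq a e : 0 < e -> a * a < e * e -> Rabs a < e.
Proof. move=> He H; case: (Rcase_abs a) => Ha; [rewrite Rabs_left // | rewrite Rabs_right //]; nra. Qed.

Lemma bipolar n (K : vset n) : is_cone K -> is_closed K -> forall z, ~ K z ->
  exists y : 'cV[R]_n, (forall t, K t -> 0 <= rsum (fun i => y i ord0 * t i ord0)) /\
                       rsum (fun i => y i ord0 * z i ord0) < 0.
Proof.
move=> [[x0 Kx0] [Kadd Kscal]] Kcl z Kz.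
pose E := fun r => exists t, K t /\ r = - dist2 z t.
have Eb : bound E.
  exists 0; move=> r [t [_ ->]]; have := dist2_ge0 z t; lra.
have Ene : exists r, E r by exists (- dist2 z x0), x0.
have [L [HLub HLleast]] := @completeness E Eb Ene.
pose d := - L.
have Hlow : forall t, K t -> d <= dist2 z t.
  move=> t Kt; have := HLub (- dist2 z t) (ex_intro _ t (conj Kt erefl)); rewrite /d; lra.
have Happ : forall e, 0 < e -> exists t, K t /\ dist2 z t < d + e.
  move=> e He; apply: NNPP => Hn.
  have : L <= L - e.
    apply: HLleast => r [t [Kt ->]].
    have : ~ (dist2 z t < d + e) by move=> H; apply: Hn; exists t.
    rewrite /d; lra.
  lra.
have Hseq : forall k : nat, exists t, K t /\ dist2 z t < d + / (INR k + 1).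
  move=> k; apply: Happ; apply: Rinv_0_lt_compat; have := pos_INR k; lra.
pose t k := proj1_sig (constructive_indefinite_description _ (Hseq k)).
have Ht : forall k, K (t k) /\ dist2 z (t k) < d + / (INR k + 1).
  move=> k; exact: (proj2_sig (constructive_indefinite_description _ (Hseq k))).
have Hpar : forall k l, dist2 (t k) (t l) <= 2 * / (INR k + 1) + 2 * / (INR l + 1).
  move=> k l.
  have [Kk Dk] := Ht k; have [Kl Dl] := Ht l.
  have Km : K (vscale (/2) (vadd (t k) (t l))).
    apply: Kscal; last exact: Kadd.
    apply: Rlt_le; apply: Rinv_0_lt_compat; lra.
  have Dm := Hlow _ Km.
  have -> : dist2 (t k) (t l) = 2 * dist2 z (t k) + 2 * dist2 z (t l) +
                 (-4) * dist2 z (vscale (/2) (vadd (t k) (t l))).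
    rewrite /dist2 rsum_lin3; apply: rsum_ext => i; rewrite !mxE; field.
  lra.
have Hcau : forall i, Cauchy_crit (fun k => t k i ord0).
  move=> i e He.
  have He2 : 0 < e * e / 4.
    have : 0 < e * e by nra.
    lra.
  have [N [HN HN0]] := archimed_cor1 _ He2.
  have HNp : 0 < INR N by apply: lt_0_INR.
  exists N => k l Hk Hl; rewrite /R_dist.
  apply: abs_lt_sq => //.
  have Hterm : (t k i ord0 - t l i ord0) * (t k i ord0 - t l i ord0) <= dist2 (t k) (t l).
    by apply: rsum_term => j; apply: Rle_0_sqr.
  have Hp := Hpar k l.
  have Hk' : INR N <= INR k + 1 by have := le_INR _ _ Hk; lra.
  have Hl' : INR N <= INR l + 1 by have := le_INR _ _ Hl; lra.
  have := Rinv_le_contravar _ _ HNp Hk'; have := Rinv_le_contravar _ _ HNp Hl'.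
  lra.
pose c i := proj1_sig (R_complete _ (Hcau i)).
pose p : 'cV[R]_n := matrix_of_fun matrix_key (fun i (_ : 'I_1) => c i).
have Hcv : forall i, Un_cv (fun k => t k i ord0) (p i ord0).
  by move=> i; rewrite mxE; exact: (proj2_sig (R_complete _ (Hcau i))).
have Kp : K p.
  apply: (Kcl t) => [k|i j]; first by case: (Ht k).
  rewrite (ord1 j); exact: Hcv.
have Hdp : dist2 z p <= d.
  refine (@Rle_cv_lim (fun k => dist2 z (t k)) (fun k => d + / (INR k + 1)) (dist2 z p) d _ _ _).
  - by move=> k; have [_ H] := Ht k; lra.
  - rewrite /dist2.
    apply: (@rsum_cv n (fun k i => (z i ord0 - t k i ord0) * (z i ord0 - t k i ord0))) => i.
    by apply: CV_mult; apply: CV_minus => //; exact: cv_const.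
  - have := CV_plus _ _ _ _ (cv_const d) cv_inv; rewrite Rplus_0_r; exact.
pose D (s : 'cV[R]_n) := rsum (fun i => (z i ord0 - p i ord0) * s i ord0).
pose N2 (s : 'cV[R]_n) := rsum (fun i => s i ord0 * s i ord0).
have N2ge : forall s, 0 <= N2 s by move=> s; apply: rsum_ge0 => i; apply: Rle_0_sqr.
have Hvar1 : forall s, K s -> D s <= 0.
  move=> s Ks.
  have H : forall l, 0 < l -> l <= 1 -> 2 * D s <= l * N2 s.
    move=> l Hl _.
    have Kq : K (vadd p (vscale l s)) by apply: Kadd => //; apply: Kscal => //; lra.
    have := Hlow _ Kq.
    have -> : dist2 z (vadd p (vscale l s)) = 1 * dist2 z p + (-2 * l) * D s + (l*l) * N2 s.
      rewrite /dist2 /D /N2 rsum_lin3; apply: rsum_ext => i; rewrite !mxE; ring.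
    move=> H1; have H2 := N2ge s; nra.
  have := small_lambda (N2ge s) H; lra.
have Hvar2 : 0 <= D p.
  have H : forall l, 0 < l -> l <= 1 -> -2 * D p <= l * N2 p.
    move=> l Hl Hl1.
    have Kq : K (vscale (1 - l) p) by apply: Kscal => //; lra.
    have := Hlow _ Kq.
    have -> : dist2 z (vscale (1 - l) p) = 1 * dist2 z p + (2 * l) * D p + (l*l) * N2 p.
      rewrite /dist2 /D /N2 rsum_lin3; apply: rsum_ext => i; rewrite !mxE; ring.
    move=> H1; have H2 := N2ge p; nra.
  have := small_lambda (N2ge p) H; lra.
have Hpos : 0 < dist2 z p.
  case: (Rle_lt_or_eq_dec _ _ (dist2_ge0 z p)) => [//|H0].
  exfalso; apply: Kz.
  have -> : z = p; last exact: Kp.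
  apply/matrixP => i j; rewrite (ord1 j).
  have := @rsum_term n (fun i => (z i ord0 - p i ord0) * (z i ord0 - p i ord0)) i
     (fun j => Rle_0_sqr (z j ord0 - p j ord0)).
  rewrite -/(dist2 z p) -H0 => Hle.
  apply: Rminus_diag_uniq; apply: Rsqr_0_uniq; rewrite /Rsqr.
  have := Rle_0_sqr (z i ord0 - p i ord0); rewrite /Rsqr; lra.
exists (matrix_of_fun matrix_key (fun i j => p i j - z i j) : 'cV[R]_n); split.
  move=> s Ks; have := Hvar1 _ Ks.
  rewrite (_ : rsum _ = -1 * D s); first lra.
  rewrite /D -rsum_scal; apply: rsum_ext => i; rewrite !mxE; ring.
rewrite (_ : rsum _ = -1 * dist2 z p + -1 * D p + 0 * N2 p); first lra.
rewrite /dist2 /D /N2 rsum_lin3; apply: rsum_ext => i; rewrite !mxE; ring.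
Qed.
From mathcomp Require Import all_algebra.
From mathcomp Require Import Rstruct.
Import GRing.Theory.
Local Open Scope ring_scope.
Lemma mmulE (m p q : nat) (B : 'M[R]_(m, p)) (C : 'M[R]_(p, q)) : mmul B C = B *m C.
Proof. by apply/matrixP => i j; rewrite !mxE. Qed.
Lemma idmE n : idm n = 1%:M.
Proof. by apply/matrixP => i j; rewrite !mxE; case: (i == j). Qed.
Lemma iprodE n (W : 'M[R]_n) x y : iprod W x y = (x^T *m (W *m y)) ord0 ord0.
Proof. rewrite /iprod mmulE !mxE; apply: eq_bigr => i _; rewrite !mxE //. Qed.
Lemma dotE n (y t : 'cV[R]_n) : rsum (fun i => y i ord0 * t i ord0) = (y^T *m t) ord0 ord0.
Proof. rewrite !mxE; apply: eq_bigr => i _; rewrite !mxE //. Qed.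

Lemma key_alg m n (M : 'M[R]_m) (N : 'M[R]_n) (A : 'M[R]_(m, n)) (X : 'M[R]_(n, m)) :
  M^T = M -> M *m M = 1%:M -> N^T = N -> N *m N = 1%:M -> M *m A = A *m N ->
  A *m N *m X *m M *m A = A ->
  X *m M *m A *m N *m X = X ->
  N *m (X *m M *m A)^T *m N = X *m M *m A ->
  let Q := X *m M *m A *m N in Q *m Q = Q /\ Q^T *m N = N *m Q.
Proof.
move=> MT MM NT NN HMA P1 P2 P4 Q; split.
  by rewrite /Q !mulmxA P2.
pose E := N *m X *m M *m A.
have HAN : forall k (B : 'M[R]_(n, k)), A *m (N *m B) = M *m (A *m B).
  by move=> k B; rewrite mulmxA -HMA -mulmxA.
have MMB : forall k (B : 'M[R]_(m, k)), M *m (M *m B) = B.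
  by move=> k B; rewrite mulmxA MM mul1mx.
have NNB : forall k (B : 'M[R]_(n, k)), N *m (N *m B) = B.
  by move=> k B; rewrite mulmxA NN mul1mx.
have AE : A *m (N *m (X *m (M *m A))) = A by rewrite !mulmxA.
have ENE : E *m N *m E = E *m N.
  rewrite /E -!mulmxA HAN AE -HMA MMB //.
have ET : E^T = E.
  have P4' : (X *m M *m A)^T *m N = N *m (X *m M *m A).
    by rewrite -{2}P4 -!mulmxA NNB.
  by rewrite /E -!mulmxA trmx_mul NT !mulmxA P4' !mulmxA.
have PE : X *m M *m A = N *m E by rewrite /E -!mulmxA NNB.
clearbody E.
have NE : N *m E = E *m N.
  have h1 : (E *m N)^T = N *m E by rewrite trmx_mul ET NT.
  have h2 : (E *m N *m E)^T = E *m N *m E by rewrite !trmx_mul ET NT mulmxA.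
  by rewrite -h1 -ENE h2 ENE.
have PT : (X *m M *m A)^T = X *m M *m A by rewrite PE trmx_mul ET NT NE.
by rewrite /Q trmx_mul NT PT mulmxA.
Qed.

Theorem lemma3p3 (m n : nat) (M : 'M[R]_m) (N : 'M[R]_n) (A : 'M[R]_(m, n))
  (X : 'M[R]_(n, m)) (K : vset n) :
  is_weight M -> is_weight N ->
  mmul M A = mmul A N ->
  is_imp M N A X ->
  is_cone K -> is_closed K ->
  (vsubset (iimg N (imul M X A) K) K <->
   vsubset (iimg N (imul M X A) (idual N K)) (idual N K)).
Proof.
move=> [MT MM] [NT NN] HMA [P1 P2 P3 P4] Kc Kcl.
rewrite !mmulE !idmE in MM NN HMA.
rewrite /imul /iadj !mmulE in P1 P2 P4.
have [Hid Hsa] := @key_alg m n M N A X MT MM NT NN HMA P1 P2 P4.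
set Q := X *m M *m A *m N in Hid Hsa.
have imgE : forall (S : vset n) y, iimg N (imul M X A) S y <-> exists2 s, S s & y = Q *m s.
  move=> S y; rewrite /iimg /imul !mmulE; by split => -[s0 Hs ->]; exists s0; rewrite // mmulE.
clearbody Q.
have SA : forall s t : 'cV[R]_n, iprod N (Q *m s) t = iprod N s (Q *m t).
  move=> s t; rewrite !iprodE trmx_mul -mulmxA (mulmxA Q^T) Hsa -mulmxA //.
split.
- move=> H y /imgE [s Hs ->] t Kt.
  rewrite SA; apply: Hs; apply: H; apply/imgE; by exists t.
- move=> H y /imgE [x Kx ->].
  apply: NNPP => nK.
  have [z [Hz1 Hz2]] := bipolar Kc Kcl nK.
  have Dz : idual N K (N *m z).
    move=> t Kt; rewrite iprodE trmx_mul NT -!mulmxA (mulmxA N) NN mul1mx -dotE.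
    exact: Hz1.
  have := H (Q *m (N *m z)) (proj2 (imgE _ _) (ex_intro2 _ _ _ Dz erefl)) x Kx.
  rewrite SA iprodE trmx_mul NT -!mulmxA (mulmxA N) NN mul1mx -dotE.
  move=> Hc; apply: (Rlt_not_le _ _ Hz2 Hc).
Qed.
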